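(* Let $R$ be a commutative ring with unit, let $\mathcal{P}$ be a poset satisfying the descending chain condition, and let $F\colon \mathcal{P}\to R\text{-mod}$ be a functor. Then the natural map $\operatorname{colim}_{\mathcal{P}_{<i}}F\to F(i)$ is a monomorphism for every $i\in\mathcal{P}$ if and only if $F$ is pseudo-projective.
   Context: A poset satisfies the descending chain condition (DCC) if it has no infinite strictly descending chain. For $i\in\mathcal{P}$, $\mathcal{P}_{<i}=\{j\in\mathcal{P}: j<i\}$ and $\mathcal{P}_{\le i}=\{j: j\le i\}$. For $j\le i$, $F(j<i)$ denotes the image under $F$ of the unique arrow $j\to i$, with $F(i<i)=1_{F(i)}$. For $j\in\mathcal{P}$, $\operatorname{Im}_F(j)=\sum_{k<j}\operatorname{Im}F(k<j)\subseteq F(j)$. For a subset $J$, $\max J$ denotes the set of maximal elements of $J$. A functor $F\colon\mathcal{P}\to R\text{-mod}$ is pseudo-projective at $i\in\mathcal{P}$ if for every finite subset $J\subset\mathcal{P}_{\le i}$ and every $\oplus_{j\in J}x_j\in\bigoplus_{j\in J}F(j)$ with $\sum_{j\in J}F(j<i)(x_j)=0$, one has $x_j\in\operatorname{Im}_F(j)$ for every $j\in\max J$. $F$ is pseudo-projective if it is pseudo-projective at every $i\in\mathcal{P}$. *)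

(* Defs.v *)
From HB Require Import structures.
From mathcomp Require Import all_boot all_order all_algebra.
Set Implicit Arguments. Unset Strict Implicit. Unset Printing Implicit Defensive.
Import Order.POrderTheory GRing.Theory.
Local Open Scope ring_scope.

Definition DCC (d : Order.disp_t) (P : porderType d) : Prop :=
  ~ exists f : nat -> P, forall n, (f n.+1 < f n)%O.

(* A functor F : P -> R-mod.  [mor F j i] is F(j<i); only its values for
   (j <= i)%O are meaningful (values on other pairs are irrelevant junk). *)
Record PFunctor (R : comPzRingType) (d : Order.disp_t) (P : porderType d) := {
  obj :> P -> lmodType R;
  mor : forall j i : P, {linear obj j -> obj i};
  mor_id : forall (i : P) (x : obj i), mor i i x = x;
  mor_comp : forall (k j i : P), (k <= j)%O -> (j <= i)%O ->
      forall x : obj k, mor j i (mor k j x) = mor k i x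
}.

Section Defs.
Variables (R : comPzRingType) (d : Order.disp_t) (P : porderType d).
Variable F : PFunctor R P.

(* A formal element of a direct sum: a finite list of homogeneous pieces
   (j, x) with x : F j; the element represented is the sum of the pieces. *)
Definition piece := {j : P & obj F j}.

Definition inj_at (l : P) (p : piece) : obj F l :=
  match tag p =P l with
  | ReflectT e => eq_rect (tag p) (fun j => obj F j) (tagged p) l e
  | ReflectF _ => 0
  end.

Definition coef (l : P) (s : seq piece) : obj F l :=
  \sum_(p <- s) inj_at l p.

Definition to_vertex (i : P) (s : seq piece) : obj F i :=
  \sum_(p <- s) mor F (tag p) i (tagged p).

(* relation generators of the colimit:  iota_k y - iota_j F(k<j) y  *)
Definition rel_pieces (r : {kj : P * P & obj F kj.1}) : seq piece :=
  [:: existT (fun j => obj F j) (tag r).1 (tagged r);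
      existT (fun j => obj F j) (tag r).2 (- mor F (tag r).1 (tag r).2 (tagged r))].

Definition rel_sum (rs : seq {kj : P * P & obj F kj.1}) : seq piece :=
  flatten (map rel_pieces rs).

(* The natural map colim_{P_{<i}} F --> F(i) is a monomorphism.
   colim_{P_{<i}} F is (its standard construction) the quotient of
   (+)_{j<i} F(j) by the submodule N spanned by iota_k y - iota_j F(k<j) y
   for k < j < i; the natural map is induced by the F(j<i).  It is a
   monomorphism (= injective) iff every element of (+)_{j<i} F(j) killed
   by sum_j F(j<i) lies in N. *)
Definition colim_map_mono (i : P) : Prop :=
  forall s : seq piece,
    all (fun p => (tag p < i)%O) s ->
    to_vertex i s = 0 ->
    exists rs : seq {kj : P * P & obj F kj.1},
      all (fun r => ((tag r).1 < (tag r).2)%O && ((tag r).2 < i)%O) rs /\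
      forall l : P, coef l s = coef l (rel_sum rs).

Definition in_ImF (j : P) (x : obj F j) : Prop :=
  exists s : seq piece,
    all (fun p => (tag p < j)%O) s /\ x = to_vertex j s.

Definition pseudo_projective_at (i : P) : Prop :=
  forall (J : seq P), uniq J -> all (fun j => (j <= i)%O) J ->
  forall x : forall j : P, obj F j,
    \sum_(j <- J) mor F j i (x j) = 0 ->
    forall j, j \in J -> (forall j', j' \in J -> ~~ (j < j')%O) ->
      in_ImF (x j).

Definition pseudo_projective : Prop := forall i : P, pseudo_projective_at i.

End Defs.

(* Main.v *)
Require Import Defs.
From HB Require Import structures.
From mathcomp Require Import all_boot all_order all_algebra.
From Stdlib Require Import Classical ClassicalEpsilon.
Set Implicit Arguments. Unset Strict Implicit. Unset Printing Implicit Defensive.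
Import Order.POrderTheory GRing.Theory.
Local Open Scope ring_scope.

Section Proofs.
Variables (R : comPzRingType) (d : Order.disp_t) (P : porderType d).

Lemma dcc_ind (dcc : DCC P) (Q : P -> Prop) :
  (forall x, (forall y, (y < x)%O -> Q y) -> Q x) -> forall x, Q x.
Proof.
move=> H x; apply: NNPP => nQx.
have step: forall z : {z | ~ Q z}, {y : {y | ~ Q y} | (sval y < sval z)%O}.
  move=> [z nz]; apply: constructive_indefinite_description.
  apply: NNPP => C; apply nz; apply: H => y lt; apply: NNPP => ny.
  by apply: C; exists (exist _ y ny).
apply: dcc.
exists (fun n => sval (iter n (fun z => sval (step z)) (exist _ x nQx))).
by move=> n; rewrite iterS; exact: (svalP (step _)).
Qed.

Lemma list_scheme (dcc : DCC P) (Q : seq P -> Prop) :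
  Q [::] ->
  (forall m L, Q L -> (forall K, all (fun k => (k < m)%O) K -> Q (K ++ L)) -> Q (m :: L)) ->
  forall L, Q L.
Proof.
move=> Q0 Hs.
have key: forall m L, Q L -> Q (m :: L).
  move=> m; elim/(dcc_ind dcc): m => m IH L QL; apply: (Hs _ _ QL).
  elim=> [|k K IHK] /=; first by move=> _.
  move=> /andP [km kK]; exact: IH km _ (IHK kK).
by elim=> // m L IHL; apply: key.
Qed.

Variable F : PFunctor R P.
Notation pc := (piece F).
Local Notation coef := (@coef R d P F).
Local Notation to_vertex := (@to_vertex R d P F).
Local Notation inj_at := (@inj_at R d P F).
Local Notation rel_sum := (@rel_sum R d P F).
Local Notation rel_pieces := (@rel_pieces R d P F).
Definition mkp (l : P) (v : obj F l) : pc := existT (fun j => obj F j) l v.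
Definition rl := {kj : P * P & obj F kj.1}.
Definition mkr (k t : P) (y : obj F k) : rl := existT (fun kj : P * P => obj F kj.1) (k, t) y.
Definition ceq (s t : seq pc) := forall l : P, coef l s = coef l t.
Definition below (L : seq P) (t : P) := has (fun l => (t <= l)%O) L.

Lemma below_cons m L t : below (m :: L) t = (t <= m)%O || below L t.
Proof. by []. Qed.

Lemma below_cat K L t : below (K ++ L) t = below K t || below L t.
Proof. by rewrite /below has_cat. Qed.

Lemma inj_at_tag (p : pc) : inj_at (tag p) p = tagged p.
Proof.
rewrite /inj_at; case: (tag p =P tag p) => [e|//].
by rewrite (eq_axiomK e).
Qed.

Lemma inj_at_mkp l (v : obj F l) : inj_at l (mkp v) = v.
Proof. exact: (inj_at_tag (mkp v)). Qed.

Lemma inj_at_neq l (p : pc) : tag p != l -> inj_at l p = 0.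
Proof. move=> ne; rewrite /inj_at; case: (tag p =P l) => // e; by rewrite e eqxx in ne. Qed.

Lemma coef_cat l s t : coef l (s ++ t) = coef l s + coef l t.
Proof. by rewrite /coef big_cat. Qed.

Lemma to_vertex_cat i s t : to_vertex i (s ++ t) = to_vertex i s + to_vertex i t.
Proof. by rewrite /to_vertex big_cat. Qed.

Lemma coef_notin l s : l \notin map tag s -> coef l s = 0.
Proof.
move=> nl; rewrite /coef big1_seq // => p /andP [_ ps]; apply: inj_at_neq.
by apply: contraNneq nl => <-; apply: map_f.
Qed.

Lemma coef_rel_sum l rs : coef l (rel_sum rs) = \sum_(r <- rs) coef l (rel_pieces r).
Proof. by rewrite /coef /rel_sum big_flatten big_map. Qed.

Lemma coef_rel_pieces l k t (y : obj F k) :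
  coef l (rel_pieces (mkr t y)) = inj_at l (mkp y) + inj_at l (mkp (- mor F k t y)).
Proof. by rewrite /coef /rel_pieces big_cons big_cons big_nil addr0. Qed.

Lemma to_vertex_coef i s J : uniq J -> {subset map tag s <= J} ->
  to_vertex i s = \sum_(j <- J) mor F j i (coef j s).
Proof.
move=> uJ sJ; rewrite /coef.
under eq_bigr => j _ do rewrite raddf_sum.
rewrite exchange_big /= /to_vertex; apply: eq_big_seq => p ps.
have pJ : tag p \in J by apply: sJ; apply: map_f.
rewrite (bigD1_seq (tag p)) //= inj_at_tag big1 ?addr0 // => j jp.
by rewrite inj_at_neq ?linear0 // eq_sym.
Qed.

Lemma to_vertex_ceq i s t : ceq s t -> to_vertex i s = to_vertex i t.
Proof.
move=> e; set J := undup (map tag s ++ map tag t).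
have uJ : uniq J by apply: undup_uniq.
rewrite (@to_vertex_coef i s J) // ?(@to_vertex_coef i t J) //.
  by apply: eq_bigr => j _; rewrite e.
by move=> x xt; rewrite mem_undup mem_cat xt orbT.
by move=> x xs; rewrite mem_undup mem_cat xs.
Qed.

Lemma to_vertex_rel_pieces i k t (y : obj F k) : (k <= t)%O -> (t <= i)%O ->
  to_vertex i (rel_pieces (mkr t y)) = 0.
Proof.
move=> kt ti; rewrite /to_vertex /rel_pieces big_cons big_cons big_nil addr0 /=.
by rewrite linearN (mor_comp kt ti) subrr.
Qed.

Lemma to_vertex_rel_sum i rs :
  all (fun r : rl => ((tag r).1 < (tag r).2)%O && ((tag r).2 < i)%O) rs ->
  to_vertex i (rel_sum rs) = 0.
Proof.
move=> /allP H; rewrite /to_vertex /rel_sum big_flatten big_map big1_seq //.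
move=> [[k t] y] /andP [_ /H /andP [/= kt ti]].
exact: (@to_vertex_rel_pieces i k t y (ltW kt) (ltW ti)).
Qed.

Definition negr (r : rl) : rl := existT (fun kj : P * P => obj F kj.1) (tag r) (- tagged r).

Lemma inj_atN l k (v : obj F k) : inj_at l (mkp (- v)) = - inj_at l (mkp v).
Proof.
case: (eqVneq k l) => [e|ne]; first by subst l; rewrite !inj_at_mkp.
by rewrite !inj_at_neq ?oppr0.
Qed.

Lemma coef_rel_sum_negr l rs : coef l (rel_sum (map negr rs)) = - coef l (rel_sum rs).
Proof.
rewrite !coef_rel_sum big_map -sumrN; apply: eq_bigr => -[[k t] y] _.
rewrite /negr /= (coef_rel_pieces l t (- y)) (coef_rel_pieces l t y).
by rewrite inj_atN linearN /= inj_atN opprD.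
Qed.

Lemma coef_rel_sum_cat l a b : coef l (rel_sum (a ++ b)) = coef l (rel_sum a) + coef l (rel_sum b).
Proof. by rewrite !coef_rel_sum big_cat. Qed.

Lemma in_ImF0 j : in_ImF (0 : obj F j).
Proof. by exists [::]; split => //; rewrite /Defs.to_vertex big_nil. Qed.

Lemma in_ImFD j (a b : obj F j) : in_ImF a -> in_ImF b -> in_ImF (a + b).
Proof.
move=> [s [s1 ->]] [t [t1 ->]]; exists (s ++ t); split.
  by rewrite all_cat s1.
by rewrite to_vertex_cat.
Qed.

Lemma in_ImF1 j k (y : obj F k) : (k < j)%O -> in_ImF (mor F k j y).
Proof.
by move=> kj; exists [:: mkp y]; split; rewrite /= ?kj // /Defs.to_vertex big_seq1.
Qed.


Lemma coef_split l s m :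
  coef l s = coef l (filter (fun p : pc => tag p != m) s) + \sum_(p <- s | tag p == m) inj_at l p.
Proof.
rewrite /Defs.coef (bigID (fun p : pc => tag p != m)) /= big_filter.
by congr (_ + _); apply: eq_bigl => p; rewrite negbK.
Qed.

Lemma pp_mono (dcc : DCC P) : pseudo_projective F -> forall i, colim_map_mono F i.
Proof.
move=> pp i.
pose Q L := forall s : seq pc, all (fun p : pc => (tag p < i)%O) s -> to_vertex i s = 0 ->
  all (fun p : pc => below L (tag p)) s ->
  exists rs : seq rl, all (fun r : rl => ((tag r).1 < (tag r).2)%O && ((tag r).2 < i)%O) rs /\
    ceq s (rel_sum rs).
suff H : forall L, Q L.
  move=> s Hs H0; apply: (H (map tag s) s Hs H0).
  by apply/allP => p ps; apply/hasP; exists (tag p) => //; apply: map_f.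
apply: (list_scheme dcc).
  move=> s _ _; case: s => [|p s] /=; last by [].
  by move=> _; exists [::].
move=> m L QL QK s Hi H0 Hb.
case: (boolP (below L m)) => [mL | nmL].
  apply: QL => //; apply/allP => p ps; have := allP Hb p ps.
  rewrite /below /= => /orP [le|] //; case/hasP: mL => l lL ml.
  by apply/hasP; exists l => //; exact: le_trans le ml.
have Hmax : forall p : pc, p \in s -> ~~ (m < tag p)%O.
  move=> p ps; have := allP Hb p ps; rewrite /below /= => /orP [le|hl].
    by rewrite (le_gtF le).
  apply/negP => mp; case/hasP: hl => l lL pl; case/negP: nmL.
  by apply/hasP; exists l => //; exact: le_trans (ltW mp) pl.
case: (boolP (m \in map tag s)) => [ms | nms]; last first.
  apply: (QK (filter (fun k => (k < m)%O) (map tag s))); rewrite ?filter_all //.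
  apply/allP => p ps; rewrite below_cat; have := allP Hb p ps.
  rewrite /below /= => /orP [le|->]; last by rewrite orbT.
  have pm : tag p != m by apply: contraNneq nms => <-; apply: map_f.
  apply/orP; left; apply/hasP; exists (tag p) => //.
  by rewrite mem_filter lt_neqAle pm le map_f.
have mi : (m < i)%O by case/mapP: ms => p ps ->; exact: (allP Hi p ps).
have Im : in_ImF (coef m s).
  apply: (pp i (undup (map tag s)) _ _ (fun l => coef l s) _ m).
  - exact: undup_uniq.
  - by apply/allP => j; rewrite mem_undup => /mapP [p ps ->]; exact: ltW (allP Hi p ps).
  - rewrite -(@to_vertex_coef i s) ?undup_uniq // => x; by rewrite mem_undup.
  - by rewrite mem_undup.
  - by move=> j'; rewrite mem_undup => /mapP [p ps ->]; apply: Hmax.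
case: Im => zs [zlt zeq].
pose rs1 := [seq mkr m (tagged p) | p <- zs].
pose s' := filter (fun p : pc => tag p != m) s ++ zs.
have Hc : ceq s' (s ++ rel_sum rs1).
  move=> l; rewrite coef_cat coef_cat (coef_split l s m) -addrA; congr (_ + _).
  rewrite coef_rel_sum big_map.
  under [X in _ = _ + X]eq_bigr => p _ do rewrite coef_rel_pieces.
  rewrite big_split /= addrCA -[LHS]addr0; congr (_ + _).
  symmetry; case: (eqVneq l m) => [->|lm].
    rewrite -(big_filter _ (fun p : pc => tag p == m)).
    have -> : \sum_(p <- [seq p <- s | tag p == m]) inj_at m p = coef m s.
      rewrite (coef_split m s m) big_filter [X in _ = X + _]big1_seq ?add0r //.
      by move=> p /andP [_]; rewrite mem_filter => /andP [pm _]; apply: inj_at_neq.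
    have -> : \sum_(p <- zs) inj_at m (mkp (- mor F (tag p) m (tagged p))) = - to_vertex m zs.
      by rewrite /Defs.to_vertex -sumrN; apply: eq_bigr => p _; rewrite inj_at_mkp.
    by rewrite -zeq subrr.
  have -> : \sum_(p <- s | tag p == m) inj_at l p = 0.
    by rewrite big1 // => p /eqP pm; rewrite inj_at_neq // pm eq_sym.
  by rewrite add0r big1 // => p _; rewrite inj_at_neq //= eq_sym.
have Hi' : all (fun p : pc => (tag p < i)%O) s'.
  rewrite all_cat; apply/andP; split.
    by apply/allP => p; rewrite mem_filter => /andP [_ /(allP Hi)].
  by apply/allP => p /(allP zlt) pm; exact: lt_trans pm mi.
have H0' : to_vertex i s' = 0.
  rewrite (to_vertex_ceq i Hc) to_vertex_cat H0 to_vertex_rel_sum ?addr0 //.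
  by apply/allP => r /mapP [p /(allP zlt) pm ->] /=; rewrite pm mi.
pose K := filter (fun k => (k < m)%O) (map tag s').
have [rs2 [v2 c2]] : exists rs : seq rl, all (fun r : rl => ((tag r).1 < (tag r).2)%O && ((tag r).2 < i)%O) rs /\
    ceq s' (rel_sum rs).
  apply: (QK K); rewrite ?filter_all //.
  apply/allP => p ps; rewrite below_cat.
  have pK : (tag p < m)%O -> below K (tag p).
    by move=> pm; apply/hasP; exists (tag p) => //; rewrite mem_filter pm map_f.
  move: ps; rewrite mem_cat => /orP [|pz]; last by rewrite pK ?(allP zlt).
  rewrite mem_filter => /andP [pm ps]; have := allP Hb p ps.
  rewrite below_cons => /orP [le|->]; last by rewrite orbT.
  by rewrite pK // lt_neqAle pm le.
exists (rs2 ++ map negr rs1); split.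
  rewrite all_cat v2 /=; apply/allP => r /mapP [r' /mapP [p /(allP zlt) pm ->] ->] /=.
  by rewrite pm mi.
move=> l; rewrite coef_rel_sum_cat coef_rel_sum_negr -c2 Hc coef_cat.
by rewrite addrK.
Qed.

Lemma coef_rel_split l rs (p : pred rl) :
  coef l (rel_sum rs) = coef l (rel_sum (filter p rs)) + coef l (rel_sum (filter (predC p) rs)).
Proof. by rewrite !coef_rel_sum !big_filter (bigID p). Qed.

Lemma core (dcc : DCC P) (mono : forall i, colim_map_mono F i) (s : seq pc) (j : P) :
  (forall p : pc, p \in s -> ~~ (j < tag p)%O) ->
  forall rs : seq rl, all (fun r : rl => ((tag r).1 < (tag r).2)%O) rs ->
  ceq s (rel_sum rs) -> in_ImF (coef j s).
Proof.
move=> jmax.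
pose Q L := forall rs : seq rl, all (fun r : rl => ((tag r).1 < (tag r).2)%O) rs ->
  ceq s (rel_sum rs) -> all (fun r : rl => below (L ++ map tag s) (tag r).2) rs ->
  in_ImF (coef j s).
suff H : forall L, Q L.
  move=> rs v c; apply: (H (map (fun r : rl => (tag r).2) rs) rs v c).
  apply/allP => r rr; rewrite below_cat; apply/orP; left.
  by apply/hasP; exists (tag r).2 => //; apply: (map_f (fun r : rl => (tag r).2)).
apply: (list_scheme dcc).
  move=> rs v c tops; rewrite c coef_rel_sum big_seq; apply: big_ind.
  - exact: in_ImF0.
  - exact: in_ImFD.
  move=> [[k t] y] rr; rewrite coef_rel_pieces.
  have /= kt := allP v _ rr; have /= tb := allP tops _ rr.
  have -> : inj_at j (mkp y) = 0.
    apply: inj_at_neq => /=; apply/eqP => kj; subst k.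
    case/hasP: tb => l /mapP [p ps ->] tp.
    by move: (jmax p ps); rewrite (lt_le_trans kt tp).
  rewrite add0r; case: (eqVneq t j) => [e|ne]; last by rewrite inj_at_neq //; exact: in_ImF0.
  subst t; rewrite inj_at_mkp -linearN; exact: in_ImF1.
move=> m L QL QK rs v c tops.
case: (boolP (below (L ++ map tag s) m)) => [mL | nmL].
  apply: (QL rs v c); apply/allP => r rr; have := allP tops r rr.
  rewrite cat_cons below_cons => /orP [le|//].
  case/hasP: mL => l lL ml; apply/hasP; exists l => //; exact: le_trans le ml.
have nms : m \notin map tag s.
  apply: contra nmL => ms; rewrite below_cat; apply/orP; right.
  by apply/hasP; exists m.
have nbot : forall r : rl, r \in rs -> (tag r).1 != m.
  move=> r rr; apply/eqP => km; have := allP tops r rr; have := allP v r rr.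
  rewrite km cat_cons below_cons => mt /orP [tm|tb].
    by move: (lt_le_trans mt tm); rewrite ltxx.
  case/negP: nmL; case/hasP: tb => l lL tl; apply/hasP; exists l => //.
  exact: le_trans (ltW mt) tl.
pose rsm := filter (fun r : rl => (tag r).2 == m) rs.
pose rso := filter (predC (fun r : rl => (tag r).2 == m)) rs.
pose w := [seq mkp (tagged r) | r <- rsm].
have wm : all (fun p : pc => (tag p < m)%O) w.
  apply/allP => p /mapP [r]; rewrite mem_filter => /andP [/eqP tm rr] ->.
  by rewrite /= -tm (allP v r rr).
have cm_rsm : coef m (rel_sum rsm) = - to_vertex m w.
  rewrite coef_rel_sum /Defs.to_vertex big_map -sumrN !big_seq; apply: eq_bigr.
  move=> [[k t] y]; rewrite mem_filter => /andP [/= /eqP tm rr]; subst t.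
  rewrite coef_rel_pieces inj_at_mkp inj_at_neq ?add0r //.
  exact: (nbot _ rr).
have cl_rsm : forall l, l != m -> coef l (rel_sum rsm) = coef l w.
  move=> l lm; rewrite coef_rel_sum [coef l w]/Defs.coef big_map !big_seq; apply: eq_bigr.
  move=> [[k t] y]; rewrite mem_filter => /andP [/= /eqP tm rr]; subst t.
  by rewrite coef_rel_pieces (@inj_at_neq l (mkp (- mor F k m y))) ?addr0 //= eq_sym.
have cm_rso : coef m (rel_sum rso) = 0.
  rewrite coef_rel_sum big_seq big1 // => -[[k t] y].
  rewrite mem_filter => /andP [/= tm rr].
  rewrite coef_rel_pieces !inj_at_neq ?addr0 //=.
  exact: (nbot _ rr).
have w0 : to_vertex m w = 0.
  apply/eqP; rewrite -oppr_eq0 -cm_rsm; apply/eqP.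
  have := c m; rewrite coef_notin // (coef_rel_split m rs (fun r : rl => (tag r).2 == m)).
  by rewrite -/rsm -/rso cm_rso addr0 => <-.
have [rs' [v' c']] := mono m w wm w0.
pose rsn := rso ++ rs'.
have cn : ceq s (rel_sum rsn).
  move=> l; rewrite c (coef_rel_split l rs (fun r : rl => (tag r).2 == m)) -/rsm -/rso.
  rewrite coef_rel_sum_cat addrC; congr (_ + _); rewrite -c'.
  case: (eqVneq l m) => [->|lm]; last exact: cl_rsm.
  rewrite cm_rsm w0 oppr0 coef_notin //; apply/negP => /mapP [p /(allP wm) pm e].
  by move: pm; rewrite -e ltxx.
pose K := filter (fun k => (k < m)%O) (map (fun r : rl => (tag r).2) rsn).
have vn : all (fun r : rl => ((tag r).1 < (tag r).2)%O) rsn.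
  rewrite all_cat; apply/andP; split.
    by apply/allP => r; rewrite mem_filter => /andP [_ /(allP v)].
  by apply/allP => r /(allP v') /andP [].
apply: (QK K _ rsn vn cn); first by rewrite filter_all.
apply/allP => r rn.
have rK : ((tag r).2 < m)%O -> below ((K ++ L) ++ map tag s) (tag r).2.
  move=> tm; rewrite !below_cat; apply/orP; left; apply/orP; left.
  apply/hasP; exists (tag r).2 => //; rewrite mem_filter tm /=.
  exact: (map_f (fun r : rl => (tag r).2)).
move: rn; rewrite mem_cat => /orP [|r'].
  rewrite mem_filter => /andP [/= tm rr]; have := allP tops r rr.
  rewrite cat_cons below_cons => /orP [le|tb].
    by apply: rK; rewrite lt_neqAle tm le.
  by rewrite -catA below_cat tb orbT.
by apply: rK; have /andP [] := allP v' r r'.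
Qed.

Lemma mono_pp (dcc : DCC P) : (forall i, colim_map_mono F i) -> pseudo_projective F.
Proof.
move=> mono i J uJ Ji x sum0 j jJ jmax.
case: (boolP (i \in J)) => [iJ | niJ].
  have ji : j = i.
    apply/eqP; apply/negPn/negP => ne; move: (jmax i iJ).
    by rewrite lt_neqAle ne (allP Ji j jJ).
  subst j.
  move: sum0; rewrite (bigD1_seq i) //= mor_id => /eqP; rewrite addr_eq0 => /eqP ->.
  exists [seq mkp (- x l) | l <- filter (fun l => l != i) J]; split.
    apply/allP => p /mapP [l]; rewrite mem_filter => /andP [li lJ] -> /=.
    by rewrite lt_neqAle li (allP Ji l lJ).
  rewrite /Defs.to_vertex big_map big_filter -sumrN; apply: eq_bigr => l _.
  by rewrite /= linearN.
pose s := [seq mkp (x l) | l <- J].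
have si : all (fun p : pc => (tag p < i)%O) s.
  apply/allP => p /mapP [l lJ ->] /=; rewrite lt_neqAle (allP Ji l lJ) andbT.
  by apply: contraNneq niJ => <-.
have s0 : to_vertex i s = 0 by rewrite /Defs.to_vertex big_map.
have [rs [v c]] := mono i s si s0.
have cj : coef j s = x j.
  rewrite /Defs.coef big_map (bigD1_seq j) //= inj_at_mkp big1 ?addr0 // => l lj.
  by rewrite inj_at_neq.
rewrite -cj; apply: (core dcc mono _ (rs := rs)) => //.
- by move=> p /mapP [l lJ ->] /=; apply: jmax.
- by apply/allP => r /(allP v) /andP [].
Qed.

End Proofs.

Theorem theoremA (R : comPzRingType) (d : Order.disp_t) (P : porderType d)
  (F : PFunctor R P) :
  DCC P ->
  ((forall i : P, colim_map_mono F i) <-> pseudo_projective F).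
Proof.
move=> dcc; split; [exact: mono_pp | exact: pp_mono].
Qed.
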